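(* Let $S$ be a finite generating subset of a group $G$ with $1\in S$, such that $S$ is $k$-separable. Let $H$ be a $k$-atom of $S$ with $1\in H$. Assume that either $G$ is infinite or $\alpha_k(S)\le\alpha_{-k}(S)$. If $|\Pi^r(H)|\ge k$, then $H$ is a subgroup of $G$.
   Context: For a group $G$ and $S\subseteq G$, the Cayley graph $\mathrm{Cay}(G,S)$ has vertex set $G$ and arcs $(x,y)$ with $x^{-1}y\in S$; so the image of $X\subseteq G$ is $XS$. For a graph $\Gamma=(V,E)$ (reflexive, locally finite), $\partial(X)=\Gamma(X)\setminus X$; $\Gamma$ is $k$-separable if some finite $X$ has $|X|\ge k$ and $|V\setminus\Gamma(X)|\ge k$; then $\kappa_k(\Gamma)=\min\{|\partial(X)|: X\text{ finite},|X|\ge k,|V\setminus\Gamma(X)|\ge k\}$, a $k$-fragment is such an $X$ attaining the minimum, a $k$-atom is a $k$-fragment of minimum cardinality, $\alpha_k(\Gamma)$ its cardinality. For $S$ with $1\in S$, $k$-fragments, $k$-atoms, $\kappa_k(S)$, $\alpha_k(S)$ refer to $\mathrm{Cay}(\langle S\rangle,S)$ ($\langle S\rangle$ the generated subgroup), $S$ is $k$-separable if this graph is, and $\alpha_{-k}(S)=\alpha_k(\mathrm{Cay}(\langle S\rangle,S^{-1}))$. $\Pi^r(X)=\{x\in G: Xx=X\}$. *)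

(* Defs.v *)
(* Groups are possibly infinite: we use the (not necessarily
   finite) [groupType] structure of mathcomp/boot/monoid.v.  Finite subsets
   of the group are represented by sequences (duplicates allowed; the
   cardinality of the represented set is [card X = size (undup X)]). *)
From HB Require Import structures.
From mathcomp Require Import all_boot.
Set Implicit Arguments. Unset Strict Implicit. Unset Printing Implicit Defensive.

Local Open Scope group_scope.

Section CayleyConnectivity.
Variable G : groupType.

Definition card (X : seq G) : nat := size (undup X).

Definition has_atleast (k : nat) (P : G -> Prop) : Prop :=
  exists s : seq G, [/\ uniq s, k <= size s & forall x, x \in s -> P x].

Definition finite_group : Prop := exists s : seq G, forall g : G, g \in s.

(* image of X in Cay(G,S): Gamma(X) = XS *)
Definition img (X S : seq G) : seq G := [seq x * s | x <- X, s <- S].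

Definition bnd (X S : seq G) : seq G := [seq y <- img X S | y \notin X].

(* X finite, |X| >= k and |V \ Gamma(X)| >= k   (here V = G = <S>) *)
Definition admissible (S : seq G) (k : nat) (X : seq G) : Prop :=
  k <= card X /\ has_atleast k (fun y => y \notin img X S).

Definition k_separable (S : seq G) (k : nat) : Prop :=
  exists X, admissible S k X.

Definition fragment (S : seq G) (k : nat) (X : seq G) : Prop :=
  admissible S k X /\
  forall Y, admissible S k Y -> card (bnd X S) <= card (bnd Y S).

Definition atom (S : seq G) (k : nat) (X : seq G) : Prop :=
  fragment S k X /\ forall Y, fragment S k Y -> card X <= card Y.

Definition invs (S : seq G) : seq G := [seq s^-1 | s <- S].

(* alpha_k(S) <= alpha_{-k}(S) = alpha_k(Cay(<S>, S^{-1})):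
   every k-atom of S has at most the size of every k-atom of S^{-1}
   (atoms all have the same size alpha) *)
Definition alpha_le (S : seq G) (k : nat) : Prop :=
  forall A B, atom S k A -> atom (invs S) k B -> card A <= card B.

Inductive generated (S : seq G) : G -> Prop :=
  | gen_one : generated S 1
  | gen_mul s x : s \in S -> generated S x -> generated S (x * s)
  | gen_inv s x : s \in S -> generated S x -> generated S (x * s^-1).

Definition generates (S : seq G) : Prop := forall g : G, generated S g.

Definition in_Pi_r (H : seq G) (x : G) : Prop :=
  forall y : G, y \in H <-> exists2 h, h \in H & y = h * x.

End CayleyConnectivity.

(* Main.v *)
Require Import Defs.
From HB Require Import structures.
From Stdlib Require Import Lia Classical.
From mathcomp Require Import all_boot.
Set Implicit Arguments. Unset Strict Implicit. Unset Printing Implicit Defensive.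

Local Open Scope group_scope.

Ltac nlia := change addn with Nat.add in *; change subn with Nat.sub in *; lia.

Ltac nlia2 := repeat match goal with H : is_true (_ <= _) |- _ => move/leP: H => H end;
  try apply/leP; nlia.

Section Aux.
Variable G : groupType.
Implicit Types (S X Y A B u : seq G) (x y g : G).
Local Notation card := (@Defs.card G).

Lemma imgP X S y :
  reflect (exists x s, [/\ x \in X, s \in S & y = x * s]) (y \in img X S).
Proof.
apply: (iffP allpairsP) => [[[x s] /= [Hx Hs ->]]|[x [s [Hx Hs ->]]]].
  by exists x, s.
by exists (x, s).
Qed.

Lemma mem_img X S x s : x \in X -> s \in S -> x * s \in img X S.
Proof. by move=> Hx Hs; apply/imgP; exists x, s. Qed.

Lemma img_self X S x : 1 \in S -> x \in X -> x \in img X S.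
Proof. by move=> H1 Hx; rewrite -[x]mulg1 mem_img. Qed.

Lemma bndE X S y : (y \in bnd X S) = (y \in img X S) && (y \notin X).
Proof. by rewrite mem_filter andbC. Qed.

Lemma card_uniq_sub s X : uniq s -> {subset s <= X} -> size s <= card X.
Proof.
move=> Us sub; apply: uniq_leq_size => // x Hx; rewrite mem_undup; exact: sub.
Qed.

Lemma card_sub X Y : {subset X <= Y} -> card X <= card Y.
Proof.
move=> sub; apply: card_uniq_sub; first exact: undup_uniq.
by move=> x; rewrite mem_undup => /sub.
Qed.

Lemma card_eq X Y : X =i Y -> card X = card Y.
Proof.
move=> e; apply/eqP; rewrite eqn_leq !card_sub // => x; by rewrite e.
Qed.

Lemma card_count X u : uniq u -> {subset X <= u} -> card X = count (mem X) u.
Proof.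
move=> Uu sub; rewrite /Defs.card -size_filter; apply: perm_size.
apply: uniq_perm; [exact: undup_uniq | exact: filter_uniq |].
move=> x; rewrite mem_undup mem_filter /=.
by case Hx: (x \in X) => //=; rewrite sub.
Qed.

Lemma count_split (a b : pred G) u :
  count a u = count (predI b a) u + count (predI (predC b) a) u.
Proof.
by rewrite -!count_filter count_predC size_filter.
Qed.

Definition tr g X := map (fun x => g * x) X.

Lemma mem_tr g X y : (y \in tr g X) = (g^-1 * y \in X).
Proof.
apply/mapP/idP => [[x Hx ->]|H]; first by rewrite mulKg.
by exists (g^-1 * y) => //; rewrite mulVKg.
Qed.

Lemma img_tr g X S y : (y \in img (tr g X) S) = (g^-1 * y \in img X S).
Proof.
apply/imgP/imgP => [[x [s [Hx Hs ->]]]|[x [s [Hx Hs E]]]].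
  exists (g^-1 * x), s; split => //; first by rewrite -mem_tr.
  by rewrite mulgA.
exists (g * x), s; split => //; first by rewrite mem_tr mulKg.
by rewrite -mulgA -E mulVKg.
Qed.

Lemma card_tr g X : card (tr g X) = card X.
Proof. by rewrite /Defs.card /tr undup_map_inj ?size_map //; exact: mulgI. Qed.

Lemma card_bnd_tr g X S : card (bnd (tr g X) S) = card (bnd X S).
Proof.
rewrite -(card_tr g (bnd X S)); apply: card_eq => y.
by rewrite mem_tr !bndE img_tr mem_tr.
Qed.

Lemma adm_tr g S k X : admissible S k X -> admissible S k (tr g X).
Proof.
move=> [Hk [w [Uw Sw Hw]]]; split; first by rewrite card_tr.
exists (tr g w); split; first by rewrite map_inj_uniq //; exact: mulgI.
  by rewrite size_map.
by move=> y; rewrite mem_tr img_tr => /Hw.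
Qed.

Definition capl A B := [seq x <- A | x \in B].

Lemma submod S A B u : 1 \in S -> uniq u -> {subset img (A ++ B) S <= u} ->
  card (bnd (A ++ B) S) + card (bnd (capl A B) S) <=
  card (bnd A S) + card (bnd B S).
Proof.
move=> H1 Uu sub.
have subA : {subset img A S <= u}.
  by move=> y /imgP [x [s [Hx Hs ->]]]; apply: sub; rewrite mem_img // mem_cat Hx.
have subB : {subset img B S <= u}.
  by move=> y /imgP [x [s [Hx Hs ->]]]; apply: sub; rewrite mem_img // mem_cat Hx orbT.
have subI : {subset img (capl A B) S <= img A S}.
  by move=> y /imgP [x [s [Hx Hs ->]]]; rewrite mem_img //; move: Hx; rewrite mem_filter => /andP[].
have subI' : {subset img (capl A B) S <= img B S}.
  by move=> y /imgP [x [s [Hx Hs ->]]]; rewrite mem_img //; move: Hx; rewrite mem_filter => /andP[].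
have cb : forall X, {subset img X S <= u} ->
    card (bnd X S) = count (mem (img X S)) u - count (mem X) u /\
    count (mem X) u <= count (mem (img X S)) u.
  move=> X sX; rewrite (card_count Uu); last by move=> y; rewrite bndE => /andP[/sX].
  rewrite (count_split (mem (img X S)) (mem X)).
  have -> : count (predI (mem X) (mem (img X S))) u = count (mem X) u.
    by apply: eq_count => y /=; case Hy: (y \in X) => //=; rewrite img_self.
  have -> : count (mem (bnd X S)) u = count (predI (predC (mem X)) (mem (img X S))) u.
    by apply: eq_count => y /=; rewrite bndE andbC.
  by split; [rewrite addKn | rewrite leq_addr].
have [eA lA] := cb A subA.
have [eB lB] := cb B subB.
have [eU lU] := cb (A ++ B) sub.
have [eI lI] := cb (capl A B) (fun y h => subA y (subI y h)).
rewrite eA eB eU eI.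
have gU : count (mem (img (A ++ B) S)) u = count (predU (mem (img A S)) (mem (img B S))) u.
  apply: eq_count => y /=; apply/imgP/orP => [[x [s [Hx Hs ->]]]|].
    by move: Hx; rewrite mem_cat => /orP[] Hx; [left|right]; rewrite mem_img.
  by case=> /imgP [x [s [Hx Hs ->]]]; exists x, s; rewrite mem_cat Hx ?orbT.
have gI : count (mem (img (capl A B) S)) u <= count (predI (mem (img A S)) (mem (img B S))) u.
  by apply: sub_count => y /= Hy; rewrite subI // subI'.
have cU : count (mem (A ++ B)) u = count (predU (mem A) (mem B)) u.
  by apply: eq_count => y /=; rewrite mem_cat.
have cI : count (mem (capl A B)) u = count (predI (mem A) (mem B)) u.
  by apply: eq_count => y /=; rewrite mem_filter andbC.
have e1 := count_predUI (mem (img A S)) (mem (img B S)) u.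
have e2 := count_predUI (mem A) (mem B) u.
move: lA lB lU lI gU gI cU cI e1 e2.
set a1 := count _ u; set a2 := count _ u; set a3 := count _ u; set a4 := count _ u.
set a5 := count _ u; set a6 := count _ u; set a7 := count _ u; set a8 := count _ u.
set a9 := count _ u; set a10 := count _ u; set a11 := count _ u; set a12 := count _ u.
move=> /leP ? /leP ? /leP ? /leP ? ? /leP ? ? ? ? ?; apply/leP.
nlia.
Qed.


Lemma cbnd S X u : 1 \in S -> uniq u -> {subset img X S <= u} ->
  card (bnd X S) + count (mem X) u = count (mem (img X S)) u.
Proof.
move=> H1 Uu sX; rewrite (card_count Uu); last by move=> y; rewrite bndE => /andP[/sX].
rewrite (count_split (mem (img X S)) (mem X)).
have -> : count (predI (mem X) (mem (img X S))) u = count (mem X) u.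
  by apply: eq_count => y /=; case Hy: (y \in X) => //=; rewrite img_self.
have -> : count (mem (bnd X S)) u = count (predI (predC (mem X)) (mem (img X S))) u.
  by apply: eq_count => y /=; rewrite bndE andbC.
by rewrite addnC.
Qed.

Lemma count_cat A B u :
  count (mem (A ++ B)) u + count (mem (capl A B)) u = count (mem A) u + count (mem B) u.
Proof.
rewrite -(count_predUI (mem A) (mem B)).
have -> : count (mem (A ++ B)) u = count (predU (mem A) (mem B)) u.
  by apply: eq_count => y /=; rewrite mem_cat.
have -> : count (mem (capl A B)) u = count (predI (mem A) (mem B)) u.
  by apply: eq_count => y /=; rewrite mem_filter andbC.
by [].
Qed.

Lemma sub_of_count (a b : pred G) u :
  count (predI b a) u = count a u -> {in u, forall x, a x -> b x}.
Proof.
move=> E; have := count_split a b u; rewrite E -{1}[count a u]addn0 => /eqP.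
rewrite eqn_add2l eq_sym -leqn0 leqNgt -has_count => /hasPn H x Hx ax.
by have := H x Hx; rewrite /= ax andbT negbK.
Qed.

Lemma inf_atleast : ~ finite_group G -> forall X n, has_atleast n (fun y => y \notin X).
Proof.
move=> nf X; elim=> [|n [w [Uw Sw Hw]]]; first by exists [::].
have [g Hg] : exists g, g \notin w ++ X.
  apply: NNPP => Hn; apply: nf; exists (w ++ X) => g.
  by case: (boolP (g \in w ++ X)) => // Hg; exfalso; apply: Hn; exists g.
exists (g :: w); split => /=.
- by rewrite Uw andbT; apply: contra Hg; rewrite mem_cat => ->.
- by [].
- move=> x; rewrite inE => /orP[/eqP ->|/Hw //].
  by apply: contra Hg; rewrite mem_cat => ->; rewrite orbT.
Qed.

Lemma invsK S : invs (invs S) = S.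
Proof. by rewrite /invs -map_comp (@eq_map _ _ _ id) ?map_id // => x /=; rewrite invgK. Qed.

Definition dualX u X T := [seq g <- u | g \notin img X T].

Lemma dual u T k X : (forall g, g \in u) -> admissible T k X ->
  admissible (invs T) k (dualX u X T) /\
  card (bnd (dualX u X T) (invs T)) <= card (bnd X T).
Proof.
move=> Hu [Hk [w [Uw Sw Hw]]]; split; first split.
- apply: leq_trans Sw _; apply: card_uniq_sub => // x Hx.
  by rewrite mem_filter Hw ?Hu.
- exists (undup X); split; [exact: undup_uniq | done |].
  move=> x; rewrite mem_undup => Hx; apply/negP => /imgP [z [t [Hz /mapP [t' Ht' ->] E]]].
  move: Hz; rewrite mem_filter => /andP [/negP Hz _]; apply: Hz.
  by rewrite (_ : z = x * t') ?mem_img // E mulgVK.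
- apply: card_sub => y; rewrite !bndE => /andP [/imgP [z [t [Hz /mapP [t' Ht' ->] E]]] Hy].
  move: Hz Hy; rewrite !mem_filter (Hu z) (Hu y) !andbT negbK => Hz ->; rewrite andTb.
  apply/negP => Hy; apply: (negP Hz).
  by rewrite (_ : z = y * t') ?mem_img // E mulgVK.
Qed.

Lemma atom_exists_le T k Y : fragment T k Y -> exists B, atom T k B /\ card B <= card Y.
Proof.
move: {2}(card Y) (leqnn (card Y)) => n; elim: n Y => [|n IH] Y HY FY.
  exists Y; split => //; split => // Z _; by apply: leq_trans HY _.
case: (classic (forall Z, fragment T k Z -> card Y <= card Z)) => [H|H].
  by exists Y; split.
have [Z HZ] := not_all_ex_not _ _ H.
have [FZ LZ] : fragment T k Z /\ card Z < card Y.
  by case: (classic (fragment T k Z)) => F; [split => //; rewrite ltnNge; apply/negP => ?; apply: HZ | exfalso; apply: HZ].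
have LZn : card Z <= n by rewrite -ltnS; apply: leq_trans LZ HY.
have [B [AB LB]] := IH Z LZn FZ.
by exists B; split => //; apply: leq_trans LB (ltnW LZ).
Qed.


Lemma inv_claim S H k w h :
 1 \in S -> atom S k H -> 1 \in H -> (~ finite_group G \/ alpha_le S k) ->
 uniq w -> k <= size w -> (forall x, x \in w -> in_Pi_r H x) -> h \in H ->
 {subset tr h^-1 H <= H} /\ {subset H <= tr h^-1 H}.
Proof.
move=> H1 HA H1H Hcase Uw Sw Hw Hh.
case: (HA) => [[Hadm Hfrag] Hmin].
set B := tr h^-1 H.
have Badm : admissible S k B := adm_tr _ Hadm.
have Bb : card (bnd B S) = card (bnd H S) := card_bnd_tr _ _ _.
have Bc : card B = card H := card_tr _ _.
have kI : k <= card (capl H B).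
  apply: leq_trans Sw _; apply: card_uniq_sub => // x Hx.
  rewrite mem_filter mem_tr invgK; apply/andP; split.
    by apply/(Hw x Hx (h * x)).2; exists h.
  by apply/(Hw x Hx x).2; exists 1 => //; rewrite mul1g.
have Iadm : admissible S k (capl H B).
  split => //; case: Hadm => _ [w' [U' S' W']]; exists w'; split => // y /W'.
  apply: contra => /imgP [x [s [Hx Hs ->]]]; rewrite mem_img //.
  by move: Hx; rewrite mem_filter => /andP [].
have Uadm : admissible S k (H ++ B).
  split.
    by apply: leq_trans Hadm.1 (card_sub _) => x; rewrite mem_cat => ->.
  case: (classic (finite_group G)) => [[s Hs]|nf]; last exact: inf_atleast nf _ k.
  have al : alpha_le S k by case: Hcase => // nf; exfalso; apply: nf; exists s.
  set u := undup s.
  have Hu : forall g, g \in u by move=> g; rewrite mem_undup.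
  have Uu : uniq u := undup_uniq s.
  have [Dadm Db] := dual Hu Hadm.
  have Dfrag : fragment (invs S) k (dualX u H S).
    split => // Y HY; have [Yadm Yb] := dual Hu HY; rewrite invsK in Yadm Yb.
    by apply: leq_trans Db _; apply: leq_trans (Hfrag _ Yadm) Yb.
  have [B0 [AB0 LB0]] := atom_exists_le Dfrag.
  have LD : card H <= card (dualX u H S) := leq_trans (al _ _ HA AB0) LB0.
  have cD : card (dualX u H S) = count (predC (mem (img H S))) u.
    by rewrite /Defs.card undup_id ?filter_uniq // size_filter.
  have sm := submod (A := H) (B := B) H1 Uu (fun x _ => Hu x).
  have fI := Hfrag _ Iadm.
  have eU := cbnd (X := H ++ B) H1 Uu (fun x _ => Hu x).
  have eA := cbnd (X := H) H1 Uu (fun x _ => Hu x).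
  have eC := count_cat H B u.
  have cA := card_count (X := H) Uu (fun x _ => Hu x).
  have cB := card_count (X := B) Uu (fun x _ => Hu x).
  have cI := card_count (X := capl H B) Uu (fun x _ => Hu x).
  have pA := count_predC (mem (img H S)) u.
  have pU := count_predC (mem (img (H ++ B) S)) u.
  exists (filter (predC (mem (img (H ++ B) S))) u); split.
  - exact: filter_uniq.
  - rewrite size_filter; rewrite cD in LD; set t := count (predC (mem (img (H ++ B) S))) u; clearbody u B; nlia2.
  - by move=> y; rewrite mem_filter => /andP [].
have Ifrag : card (bnd (capl H B) S) <= card (bnd H S).
  have := Hfrag _ Uadm.
  have := submod (A := H) (B := B) (u := undup (img (H ++ B) S)) H1 (undup_uniq _)
    (fun x hx => etrans (mem_undup _ _) hx).
  move=> ? ?; nlia2.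
have cIH : card H <= card (capl H B).
  by apply: Hmin; split => // Y HY; apply: leq_trans Ifrag (Hfrag Y HY).
set u0 := undup (H ++ B).
have Uu0 : uniq u0 := undup_uniq _.
have sH : {subset H <= u0} by move=> x Hx; rewrite mem_undup mem_cat Hx.
have sB : {subset B <= u0} by move=> x Hx; rewrite mem_undup mem_cat Hx orbT.
have sI : {subset capl H B <= u0} by move=> x; rewrite mem_filter => /andP [_ /sH].
have l1 : card (capl H B) <= card H by apply: card_sub => x; rewrite mem_filter => /andP [].
have l2 : card (capl H B) <= card B by apply: card_sub => x; rewrite mem_filter => /andP [].
have e1 : count (mem (capl H B)) u0 = count (predI (mem B) (mem H)) u0.
  by apply: eq_count => x /=; rewrite mem_filter.
have e2 : count (mem (capl H B)) u0 = count (predI (mem H) (mem B)) u0.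
  by apply: eq_count => x /=; rewrite mem_filter andbC.
rewrite (card_count Uu0 sH) in cIH l1 Bc.
rewrite (card_count Uu0 sB) in l2 Bc.
rewrite (card_count Uu0 sI) in cIH l1 l2.
have E1 : count (predI (mem H) (mem B)) u0 = count (mem B) u0.
  by rewrite -e2; apply/eqP; rewrite eqn_leq l2 Bc cIH.
have E2 : count (predI (mem B) (mem H)) u0 = count (mem H) u0.
  by rewrite -e1; apply/eqP; rewrite eqn_leq l1 cIH.
split => x Hx.
- exact: (sub_of_count E1) x (sB x Hx) Hx.
- exact: (sub_of_count E2) x (sH x Hx) Hx.
Qed.

End Aux.

Theorem mainTheorem6 (G : groupType) (S H : seq G) (k : nat) :
  1 \in S -> generates S -> k_separable S k ->
  atom S k H -> 1 \in H ->
  (~ finite_group G \/ alpha_le S k) ->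
  has_atleast k (in_Pi_r H) ->
  group_closed (mem H).
Proof.
move=> H1 _ _ HA H1H Hcase [w [Uw Sw Hw]].
split => // x y Hx Hy.
have [Cy _] := inv_claim H1 HA H1H Hcase Uw Sw Hw Hy.
have [_ Cx] := inv_claim H1 HA H1H Hcase Uw Sw Hw Hx.
have Vy : y^-1 \in H by apply: Cy; rewrite mem_tr invgK mulgV.
by have := Cx _ Vy; rewrite mem_tr invgK.
Qed.
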